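(* Let $m\ge 1$, $n\ge 1$ and $N>2n$ be integers and let $T\ge 1$. For parameters $M_0,M_1,\dots,M_n\in\mathbb R^{m\times m}$ with $M_0=M_0^\top$, let $\mathbf M_N$ be the $mN\times mN$ matrix, viewed as an $N\times N$ array of $m\times m$ blocks indexed by $i,j\in\{1,\dots,N\}$, whose $(i,j)$ block equals $M_k$ if $i-j\equiv k \pmod N$ with $0\le k\le n$, equals $M_k^\top$ if $j-i\equiv k\pmod N$ with $1\le k\le n$, and equals $0$ otherwise. The parameters are admissible if $\mathbf M_N$ is positive definite, and then they define the Gaussian density $$p_{(M_0,\dots,M_n)}(y)=(2\pi)^{-mN/2}\det(\mathbf M_N)^{1/2}\exp\!\left(-\tfrac12 y^\top\mathbf M_N y\right),\qquad y\in\mathbb R^{mN}.$$ Let $y^{(1)},\dots,y^{(T)}\in\mathbb R^{mN}$ be observations, treated as independent samples from this density, and write $y^{(t)}=(y^{(t)}(1)^\top,\dots,y^{(t)}(N)^\top)^\top$ with $y^{(t)}(j)\in\mathbb R^m$. Define the sample covariances $$\hat\Sigma_k=\frac{1}{NT}\sum_{t=1}^T\sum_{j=1}^N y^{(t)}(j+k)\,y^{(t)}(j)^\top,\qquad k=0,1,\dots,n,$$ with time indices taken modulo $N$. Suppose $\hat{\boldsymbol\Sigma}_N$ is a solution of the block-circulant band extension problem with data $\hat\Sigma_0,\dots,\hat\Sigma_n$, i.e. $\hat{\boldsymbol\Sigma}_N$ is a symmetric positive definite $mN\times mN$ matrix whose $(i,j)$ block equals $\Sigma_{(i-j)\bmod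 N}$ for some matrices $\Sigma_0,\dots,\Sigma_{N-1}\in\mathbb R^{m\times m}$ with $\Sigma_k=\hat\Sigma_k$ for $k=0,\dots,n$, and such that $\hat{\boldsymbol\Sigma}_N^{-1}$ is block-circulant and banded of bandwidth $n$ (its $(i,j)$ block is zero whenever the cyclic distance $\min\{(i-j)\bmod N,(j-i)\bmod N\}$ exceeds $n$). Then the maximum likelihood estimates of $(M_0,M_1,\dots,M_n)$, i.e. the admissible parameters maximizing $\prod_{t=1}^T p_{(M_0,\dots,M_n)}(y^{(t)})$, are the nonzero blocks of $\hat{\boldsymbol\Sigma}_N^{-1}$: $\hat M_k$ is the $(k+1,1)$ block of $\hat{\boldsymbol\Sigma}_N^{-1}$, $k=0,\dots,n$.
   Context: This is the maximum likelihood identification problem for (Gaussian) AR-type stationary reciprocal models $\mathbf M_N\mathbf y=\mathbf e$ on the discrete circle $\mathbb Z_N$; the likelihood does not require the true data distribution to be Gaussian. A matrix is block-circulant if its $(i,j)$ block depends only on $(i-j)\bmod N$. *)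

(* Defs.v *)
From mathcomp Require Import all_boot all_order all_algebra.
From mathcomp Require Import reals.
From mathcomp.analysis Require Import sequences exp trigo.
Set Implicit Arguments. Unset Strict Implicit. Unset Printing Implicit Defensive.
Import Order.TTheory GRing.Theory Num.Theory.
Local Open Scope ring_scope.

(* Vectors/matrices of size m*N are viewed as N blocks of size m:
   the pair (block index j : 'I_N, offset r : 'I_m) corresponds to the
   global index mxvec_index j r : 'I_(N*m) (a bijection). *)
Definition pos_of (N m : nat) (j : 'I_N) (r : 'I_m) : 'I_(N * m) :=
  mxvec_index j r.
Definition pair_of (N m : nat) (a : 'I_(N * m)) : 'I_N * 'I_m :=
  enum_val (cast_ord (esym (mxvec_cast N m)) a).

Section Defs.
Variable R : realType.

Definition blk (N m : nat) (A : 'M[R]_(N * m)) (i j : 'I_N) : 'M[R]_m :=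
  \matrix_(r, s) A (pos_of i r) (pos_of j s).

(* block (k,l) with nat indices (0-based), 0 if out of range *)
Definition blkn (N m : nat) (A : 'M[R]_(N * m)) (k l : nat) : 'M[R]_m :=
  match @insub _ (fun x => x < N)%N 'I_N k, @insub _ (fun x => x < N)%N 'I_N l with
  | Some i, Some j => blk A i j
  | _, _ => 0
  end.

Definition blkmx (N m : nat) (B : 'I_N -> 'I_N -> 'M[R]_m) : 'M[R]_(N * m) :=
  \matrix_(a, b) B (pair_of a).1 (pair_of b).1 (pair_of a).2 (pair_of b).2.

Definition vblk (N m : nat) (y : 'cV[R]_(N * m)) (j : 'I_N) : 'cV[R]_m :=
  \col_r y (pos_of j r) 0.

(* (i - j) mod N, for i j < N *)
Definition cdiff (N : nat) (i j : nat) : nat := ((i + N - j) %% N)%N.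

(* parameter M_k for k : nat, 0 if k > n *)
Definition getM (n m : nat) (M : 'I_n.+1 -> 'M[R]_m) (k : nat) : 'M[R]_m :=
  match @insub _ (fun x => x < n.+1)%N 'I_n.+1 k with
  | Some i => M i | None => 0 end.

Definition bigM (N n m : nat) (M : 'I_n.+1 -> 'M[R]_m) : 'M[R]_(N * m) :=
  blkmx (fun i j : 'I_N =>
    if (cdiff N i j <= n)%N then getM M (cdiff N i j)
    else if (cdiff N j i <= n)%N then (getM M (cdiff N j i))^T
    else 0).

Definition posdef (k : nat) (A : 'M[R]_k) : Prop :=
  A^T = A /\ forall x : 'cV[R]_k, x != 0 -> 0 < (x^T *m A *m x) 0 0.

Definition admissible (N n m : nat) (M : 'I_n.+1 -> 'M[R]_m) : Prop :=
  (M ord0)^T = M ord0 /\ posdef (bigM N M).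

Definition density (N n m : nat) (M : 'I_n.+1 -> 'M[R]_m) (y : 'cV[R]_(N * m)) : R :=
  (Num.sqrt (2 * pi)) ^- (N * m) * Num.sqrt (\det (bigM N M))
  * expR (- (1 / 2) * (y^T *m bigM N M *m y) 0 0).

Definition likelihood (T N n m : nat) (M : 'I_n.+1 -> 'M[R]_m)
  (y : 'I_T -> 'cV[R]_(N * m)) : R :=
  \prod_(t < T) density M (y t).

Definition shiftN (N : nat) (j : 'I_N) (k : nat) : 'I_N := insubd j ((j + k) %% N)%N.

Definition sampleCov (T N m : nat) (y : 'I_T -> 'cV[R]_(N * m)) (k : nat) : 'M[R]_m :=
  (N * T)%:R^-1 *: \sum_(t < T) \sum_(j < N) (vblk (y t) (shiftN j k) *m (vblk (y t) j)^T).

Definition circ_band_ext (T N n m : nat) (y : 'I_T -> 'cV[R]_(N * m))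
  (Sig : 'M[R]_(N * m)) : Prop :=
  posdef Sig /\
  (exists S : nat -> 'M[R]_m,
     (forall i j : 'I_N, blk Sig i j = S (cdiff N i j)) /\
     (forall k, (k <= n)%N -> S k = sampleCov y k)) /\
  (exists C : nat -> 'M[R]_m, forall i j : 'I_N, blk (invmx Sig) i j = C (cdiff N i j)) /\
  (forall i j : 'I_N, (n < minn (cdiff N i j) (cdiff N j i))%N -> blk (invmx Sig) i j = 0).

End Defs.

(* Main.v *)
Require Import Defs.
From mathcomp Require Import all_boot all_order all_algebra.
From mathcomp Require Import reals.
From mathcomp.analysis Require Import sequences exp trigo.
From mathcomp.algebra_tactics Require Import ring lra.
Set Implicit Arguments. Unset Strict Implicit. Unset Printing Implicit Defensive.
Import Order.TTheory GRing.Theory Num.Theory.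
Local Open Scope ring_scope.


Section A.
Variable R : realType.

Lemma mx11_mulE p q (P : 'M[R]_(p,1)) (Q : 'M[R]_(1,q)) i j :
  (P *m Q) i j = P i 0 * Q 0 j.
Proof. by rewrite mxE big_ord1. Qed.

Lemma mxBE p q (A B : 'M[R]_(p,q)) i j : (A - B) i j = A i j - B i j.
Proof. by rewrite !mxE. Qed.
Lemma mxDE p q (A B : 'M[R]_(p,q)) i j : (A + B) i j = A i j + B i j.
Proof. by rewrite !mxE. Qed.
Lemma mxZE p q c (A : 'M[R]_(p,q)) i j : (c *: A) i j = c * A i j.
Proof. by rewrite !mxE. Qed.

Lemma scal00 (x : R) : (x%:M : 'M[R]_1) 0 0 = x.
Proof. by rewrite mxE eqxx mulr1n. Qed.

Lemma quad_block k1 k2 (u : 'cV[R]_k1) (v : 'cV[R]_k2) A B C D :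
  (col_mx u v)^T *m block_mx A B C D *m col_mx u v =
  u^T *m A *m u + u^T *m B *m v + (v^T *m C *m u + v^T *m D *m v).
Proof.
rewrite tr_col_mx mul_row_block mul_row_col !mulmxDl.
by rewrite -!addrA; congr (_ + _); rewrite addrCA.
Qed.

Lemma posdef_blockE k (X : 'M[R]_(1 + k)) : posdef X ->
  exists a (b : 'cV[R]_k) D, X = block_mx a%:M b^T b D.
Proof.
move=> [hs _]; exists (ulsubmx X 0 0), (dlsubmx X), (drsubmx X).
rewrite -{1}[X]submxK -mx11_scalar; congr block_mx.
have := hs; rewrite -{1 2}[X]submxK tr_block_mx => /eq_block_mx [_ _ h _].
by rewrite -h trmxK.
Qed.

Lemma posdef_schur k (a : R) (b : 'cV[R]_k) (D : 'M[R]_k) :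
  posdef (block_mx a%:M b^T b D : 'M_(1 + k)) ->
  0 < a /\ posdef (D - a^-1 *: (b *m b^T)).
Proof.
move=> [hs hp].
have ha : 0 < a.
  have := hp (col_mx 1 0); rewrite quad_block.
  rewrite !(mul0mx, mulmx0, trmx0, addr0, mulmx1, mul1mx, trmx1) mxE eqxx mulr1n.
  apply; apply/negP => /eqP/colP/(_ (lshift k 0)).
  by rewrite col_mxEu !mxE /= => /eqP; rewrite oner_eq0.
split=> //.
have hD : D^T = D.
  by move: hs; rewrite tr_block_mx => /eq_block_mx [_ _ _ ->].
split.
  by rewrite linearB /= linearZ /= trmx_mul trmxK hD.
move=> v v0.
pose s : R := (b^T *m v) 0 0.
have := hp (col_mx (- (a^-1 * s))%:M v); rewrite quad_block.
have -> : (v^T *m (D - a^-1 *: (b *m b^T)) *m v) 0 0 =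
  (v^T *m D *m v) 0 0 - a^-1 * s * s.
  rewrite mulmxBr mulmxBl -scalemxAr -scalemxAl.
  rewrite mxBE mxZE -mulrA.
  congr (_ - _ * _).
  rewrite mulmxA -(mulmxA (v^T *m b)) mx11_mulE /s.
  by rewrite -[b in (v^T *m b)]trmxK -trmx_mul mxE.
rewrite !tr_scalar_mx -!scalar_mxM mul_scalar_mx -scalemxAl mul_mx_scalar.
rewrite !mxDE !mxZE scal00.
have -> : (v^T *m b) 0 0 = s by rewrite /s -[b in (v^T *m b)]trmxK -trmx_mul mxE.
move=> h; apply: (lt_le_trans (h _)).
  apply: contra v0 => /eqP; rewrite -col_mx0 => /eq_col_mx [_ ->] //.
rewrite le_eqVlt; apply/orP; left; apply/eqP.
rewrite -/s; clear h; clearbody s.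
by field; rewrite lt0r_neq0.
Qed.

Lemma det_block_schur k (a : R) (b : 'cV[R]_k) (D : 'M[R]_k) : a != 0 ->
  \det (block_mx a%:M b^T b D : 'M_(1 + k)) = a * \det (D - a^-1 *: (b *m b^T)).
Proof.
move=> a0.
pose E : 'M[R]_(1 + k) := block_mx 1%:M 0 (- (a^-1) *: b) 1%:M.
have hE : \det E = 1 by rewrite det_lblock !det1 mulr1.
have : E *m block_mx a%:M b^T b D = block_mx a%:M b^T 0 (D - a^-1 *: (b *m b^T)).
  rewrite mulmx_block !mul1mx !mul0mx !addr0; congr block_mx.
    by rewrite -scalemxAl mul_mx_scalar scalerA mulNr mulVf // scaleN1r addNr.
  by rewrite -scalemxAl scaleNr addrC.
by move/(congr1 determinant); rewrite det_mulmx hE mul1r det_ublock det_scalar1.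
Qed.

Lemma tr_block_schur k (a : R) (b : 'cV[R]_k) (D : 'M[R]_k) :
  \tr (block_mx a%:M b^T b D : 'M_(1 + k)) = a + \tr D.
Proof. by rewrite mxtrace_block mxtrace_scalar. Qed.

Lemma tr_bbT k (b : 'cV[R]_k) : \tr (b *m b^T) = \sum_i b i 0 ^+ 2.
Proof.
rewrite /mxtrace; apply: eq_bigr => i _; by rewrite mx11_mulE mxE expr2.
Qed.

Lemma tr_bbT_ge0 k (b : 'cV[R]_k) : 0 <= \tr (b *m b^T).
Proof. by rewrite tr_bbT sumr_ge0 // => i _; rewrite sqr_ge0. Qed.

Lemma tr_bbT_eq0 k (b : 'cV[R]_k) : \tr (b *m b^T) = 0 -> b = 0.
Proof.
rewrite tr_bbT => /eqP; rewrite psumr_eq0; last by move=> i _; rewrite sqr_ge0.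
move=> /allP h; apply/colP => i; rewrite mxE.
by have := h i (mem_index_enum i); rewrite sqrf_eq0 => /eqP.
Qed.

Lemma detbound k (X : 'M[R]_k) : posdef X ->
  0 < \det X /\ \det X <= expR (\tr X - k%:R) /\
  (\det X = expR (\tr X - k%:R) -> X = 1%:M).
Proof.
elim: k X => [|k IH] X hX.
  have -> : X = 1%:M by apply/matrixP => [[]].
  rewrite det1 mxtrace1 subrr expR0; split => //; split => //.
have [a [b [D eX]]] := @posdef_blockE k X hX.
rewrite eX in hX *.
have [ha hQ] := @posdef_schur k a b D hX.
set Q := D - a^-1 *: (b *m b^T) in hQ *.
have [dQ [leQ eqQ]] := IH Q hQ.
rewrite det_block_schur ?lt0r_neq0 // tr_block_schur.
have trQ : \tr Q = \tr D - a^-1 * \tr (b *m b^T) by rewrite /Q raddfB /= linearZ.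
have t0 := tr_bbT_ge0 b.
have at0 : 0 <= a^-1 * \tr (b *m b^T) by rewrite mulr_ge0 // invr_ge0 ltW.
have h1 : a <= expR (a - 1) by have := expR_ge1Dx (a - 1); rewrite addrC subrK.
have h2 : a * \det Q <= expR (a - 1) * expR (\tr Q - k%:R)
  by rewrite ler_pM // ?ltW.
have h3 : expR (a - 1) * expR (\tr Q - k%:R) <= expR (a + \tr D - k.+1%:R).
  by rewrite -expRD ler_expR trQ -natr1; lra.
split; first by rewrite mulr_gt0.
split; first exact: le_trans h2 h3.
move=> heq.
have e12 : a * \det Q = expR (a - 1) * expR (\tr Q - k%:R).
  by apply/eqP; rewrite eq_le h2 heq h3.
have E1 := expR_gt0 (a - 1); have E2 := expR_gt0 (\tr Q - k%:R).
have ea : a = expR (a - 1) by nra.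
have eQ : \det Q = expR (\tr Q - k%:R) by nra.
have Q1 := eqQ eQ.
have e3 : expR (a - 1) * expR (\tr Q - k%:R) = expR (a + \tr D - k.+1%:R).
  by rewrite -e12.
move: e3; rewrite -expRD => /expR_inj; rewrite trQ -natr1 => e3.
have : a^-1 * \tr (b *m b^T) = 0 by lra.
move/eqP; rewrite mulf_eq0 invr_eq0 (negbTE (lt0r_neq0 ha)) /= => /eqP /tr_bbT_eq0 b0.
have a1 : a = 1.
  apply/eqP; apply/negPn/negP => an1.
  have : a - 1 != 0 by rewrite subr_eq0.
  by move/expR_gt1Dx; rewrite addrC subrK -ea ltxx.
move: Q1; rewrite /Q b0 a1 mul0mx scaler0 subr0 => ->.
by rewrite trmx0 -scalar_mx_block.
Qed.

Lemma unit_lblock k1 k2 (A : 'M[R]_k1) (C : 'M[R]_(k2, k1)) (D : 'M[R]_k2) :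
  A \in unitmx -> D \in unitmx -> block_mx A 0 C D \in unitmx.
Proof.
rewrite !unitmxE !unitfE det_lblock => h1 h2.
by rewrite mulf_neq0.
Qed.

Lemma chol k (S : 'M[R]_k) : posdef S ->
  exists L : 'M[R]_k, L \in unitmx /\ S = L *m L^T.
Proof.
elim: k S => [|k IH] S hS.
  by exists 1%:M; split; [exact: unitmx1 | apply/matrixP => [[]]].
have [a [b [D eX]]] := @posdef_blockE k S hS.
rewrite eX in hS *.
suff [L [uL eL]] : exists L : 'M_(1 + k),
  L \in unitmx /\ (block_mx a%:M b^T b D : 'M_(1 + k)) = L *m L^T by exists L.
have [ha hQ] := @posdef_schur k a b D hS.
have [L' [uL' eL']] := IH _ hQ.
have c0 : 0 < Num.sqrt a by rewrite sqrtr_gt0.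
exists (block_mx (Num.sqrt a)%:M 0 ((Num.sqrt a)^-1 *: b) L' : 'M_(1 + k)).
split.
  apply: (@unit_lblock 1 k) => //.
  by rewrite unitmxE unitfE det_scalar1 lt0r_neq0.
rewrite tr_block_mx tr_scalar_mx trmx0 mulmx_block !mulmx0 !mul0mx !addr0.
congr block_mx.
- by rewrite -scalar_mxM -expr2 sqr_sqrtr // ltW.
- by rewrite linearZ /= mul_scalar_mx scalerA mulfV ?scale1r // lt0r_neq0.
- by rewrite -scalemxAl mul_mx_scalar scalerA mulVf ?scale1r // lt0r_neq0.
- rewrite -eL' linearZ /= -scalemxAl -scalemxAr scalerA -expr2 exprVn sqr_sqrtr ?ltW //.
  by rewrite addrC subrK.
Qed.

Lemma unit_inj k (L : 'M[R]_k) (x : 'cV[R]_k) : L \in unitmx -> x != 0 -> L *m x != 0.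
Proof.
move=> uL; apply: contra => /eqP h; apply/eqP.
by rewrite -(mulKmx uL x) h mulmx0.
Qed.

Lemma core k (A S : 'M[R]_k) : posdef A -> posdef S ->
  \det A * \det S <= expR (\tr (A *m S) - k%:R) /\
  (\det A * \det S = expR (\tr (A *m S) - k%:R) -> A *m S = 1%:M).
Proof.
move=> [hAs hAp] hS.
have [L [uL eS]] := chol hS.
pose X := L^T *m A *m L.
have hX : posdef X.
  split; first by rewrite /X !trmx_mul trmxK hAs mulmxA.
  move=> x x0.
  have := hAp (L *m x) (unit_inj uL x0).
  by rewrite /X trmx_mul !mulmxA.
have [_ [le1 eq1]] := detbound hX.
have dX : \det X = \det A * \det S.
  by rewrite /X eS !det_mulmx det_tr; ring.
have tX : \tr X = \tr (A *m S).
  by rewrite /X -mulmxA mxtrace_mulC -mulmxA -eS.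
rewrite -dX -tX; split=> // /eq1 X1.
have uLT : L^T \in unitmx by rewrite unitmx_tr.
have -> : A *m S = invmx L^T *m (X *m L^T) by rewrite /X eS !mulmxA mulVmx ?mul1mx.
by rewrite X1 mul1mx mulVmx.
Qed.
End A.


Section B.
Variable R : realType.
Variables N m : nat.

Lemma pos_ofK (i : 'I_N) (r : 'I_m) : pair_of (pos_of i r) = (i, r).
Proof. by rewrite /pair_of /pos_of /mxvec_index cast_ordK enum_rankK. Qed.

Lemma pair_ofK (a : 'I_(N * m)) : pos_of (pair_of a).1 (pair_of a).2 = a.
Proof.
by rewrite /pair_of /pos_of /mxvec_index -surjective_pairing enum_valK cast_ordKV.
Qed.

Lemma blk_blkmx (B : 'I_N -> 'I_N -> 'M[R]_m) i j : blk (blkmx B) i j = B i j.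
Proof. by apply/matrixP => r s; rewrite !mxE !pos_ofK. Qed.

Lemma blk_inj (A B : 'M[R]_(N * m)) : (forall i j, blk A i j = blk B i j) -> A = B.
Proof.
move=> h; apply/matrixP => a b; rewrite -(pair_ofK a) -(pair_ofK b).
by have := congr1 (fun M : 'M_m => M (pair_of a).2 (pair_of b).2) (h (pair_of a).1 (pair_of b).1); rewrite !mxE.
Qed.

Lemma blk_tr (A : 'M[R]_(N * m)) i j : blk A^T i j = (blk A j i)^T.
Proof. by apply/matrixP => r s; rewrite !mxE. Qed.

Lemma big_pos (F : 'I_(N * m) -> R) :
  \sum_a F a = \sum_(i < N) \sum_(r < m) F (pos_of i r).
Proof.
rewrite pair_big /= (reindex (fun p : 'I_N * 'I_m => pos_of p.1 p.2)) //.
by exists (@pair_of N m) => [[i r]|a] _; rewrite ?pos_ofK ?pair_ofK.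
Qed.

Lemma tr_blk (A B : 'M[R]_(N * m)) :
  \tr (A *m B) = \sum_(i < N) \sum_(j < N) \tr (blk A i j *m blk B j i).
Proof.
rewrite /mxtrace big_pos; apply: eq_bigr => i _.
rewrite exchange_big /=; apply: eq_bigr => r _.
rewrite mxE big_pos; apply: eq_bigr => j _.
by rewrite mxE; apply: eq_bigr => s _; rewrite !mxE.
Qed.
End B.

Local Close Scope ring_scope.

Section C.
Variable N : nat.

Lemma shiftN_val (j : 'I_N) d : val (shiftN j d) = (j + d) %% N.
Proof.
rewrite /shiftN val_insubd ltn_pmod //.
by apply: leq_ltn_trans (ltn_ord j).
Qed.

Lemma cdiffP (i j d : nat) : j < N -> d < N -> i %% N = (j + d) %% N -> cdiff N i j = d.
Proof.
move=> jN dN h; rewrite /cdiff -(modn_small dN); apply/eqP.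
rewrite -(eqn_modDr j) subnK; last by apply: leq_trans (ltnW jN) (leq_addl _ _).
by rewrite modnDr h addnC.
Qed.

Lemma cdiff_shift (j : 'I_N) d : d < N -> cdiff N (shiftN j d) j = d.
Proof. by move=> dN; apply: cdiffP => //; rewrite shiftN_val modn_mod. Qed.

Lemma cdiff_shift' (j : 'I_N) d : d < N -> cdiff N j (shiftN j d) = (N - d) %% N.
Proof.
move=> dN; have N0 : 0 < N by apply: leq_ltn_trans (ltn_ord j).
apply: cdiffP; rewrite ?shiftN_val ?ltn_pmod //.
by rewrite modnDm -addnA subnKC ?(ltnW dN) // modnDr.
Qed.

Lemma shift_shift (j : 'I_N) d : d < N -> shiftN (shiftN j ((N - d) %% N)) d = j.
Proof.
move=> dN; apply: val_inj; rewrite /= !shiftN_val modnDml -addnA -modnDmr modnDml.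
by rewrite subnK ?(ltnW dN) // modnn addn0 modn_small.
Qed.

Lemma shiftd_inj (j : 'I_N) : injective (fun d : 'I_N => shiftN j d).
Proof.
move=> d1 d2 /= h; apply: ord_inj.
by rewrite -(cdiff_shift j (ltn_ord d1)) h cdiff_shift.
Qed.

Lemma shiftj_inj d : d < N -> injective (fun j : 'I_N => shiftN j ((N - d) %% N)).
Proof.
move=> dN j1 j2 /= h.
by rewrite -(shift_shift j1 dN) h shift_shift.
Qed.
End C.

Local Open Scope ring_scope.


Section D.
Variable R : realType.
Variables N n m : nat.

Lemma getM_ord (M : 'I_n.+1 -> 'M[R]_m) (k : 'I_n.+1) : getM M k = M k.
Proof.
rewrite /getM; case: insubP => [u _ /val_inj -> //|].
by rewrite ltn_ord.
Qed.

Lemma blkn_ord (A : 'M[R]_(N * m)) (k l : 'I_N) : blkn A k l = blk A k l.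
Proof.
rewrite /blkn; case: insubP => [u _ /val_inj -> |]; last by rewrite ltn_ord.
by case: insubP => [u' _ /val_inj -> //|]; rewrite ltn_ord.
Qed.

Lemma blk_bigM (M : 'I_n.+1 -> 'M[R]_m) i j : blk (bigM N M) i j =
  if (cdiff N i j <= n)%N then getM M (cdiff N i j)
  else if (cdiff N j i <= n)%N then (getM M (cdiff N j i))^T else 0.
Proof. by rewrite /bigM blk_blkmx. Qed.

Definition Gd (M : 'I_n.+1 -> 'M[R]_m) (d : nat) : 'M[R]_m :=
  if (d <= n)%N then getM M d
  else if ((N - d) %% N <= n)%N then (getM M ((N - d) %% N))^T else 0.

Lemma blk_bigM_shift (M : 'I_n.+1 -> 'M[R]_m) (j : 'I_N) (d : nat) : (d < N)%N ->
  blk (bigM N M) (shiftN j d) j = Gd M d.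
Proof. by move=> dN; rewrite blk_bigM cdiff_shift // cdiff_shift'. Qed.

Definition Wz (Z : 'M[R]_(N * m)) (d : nat) : 'M[R]_m := \sum_(j < N) blk Z j (shiftN j d).

Lemma tr_bigM (M : 'I_n.+1 -> 'M[R]_m) (Z : 'M[R]_(N * m)) :
  \tr (bigM N M *m Z) = \sum_(d < N) \tr (Gd M d *m Wz Z d).
Proof.
rewrite tr_blk exchange_big /=.
under eq_bigr => j _ do rewrite (reindex_inj (@shiftd_inj N j)) /=.
rewrite exchange_big /=; apply: eq_bigr => d _.
rewrite /Wz mulmx_sumr raddf_sum /=; apply: eq_bigr => j _.
by rewrite blk_bigM_shift.
Qed.
End D.


Section E.
Variable R : realType.
Variables N n m T : nat.
Variable y : 'I_T -> 'cV[R]_(N * m).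

Lemma quad_trace k (A : 'M[R]_k) (x : 'cV[R]_k) :
  (x^T *m A *m x) 0 0 = \tr (A *m (x *m x^T)).
Proof.
have -> : (x^T *m A *m x) 0 0 = \tr (x^T *m A *m x) by rewrite /mxtrace big_ord1.
by rewrite mxtrace_mulC (mulmxA x) mxtrace_mulC.
Qed.

Definition Ymx : 'M[R]_(N * m) := \sum_(t < T) y t *m (y t)^T.

Lemma sum_quad (A : 'M[R]_(N * m)) :
  \sum_(t < T) ((y t)^T *m A *m y t) 0 0 = \tr (A *m Ymx).
Proof.
rewrite /Ymx mulmx_sumr raddf_sum /=; apply: eq_bigr => t _.
by rewrite quad_trace.
Qed.

Lemma Ymx_sym : Ymx^T = Ymx.
Proof.
rewrite /Ymx raddf_sum /=; apply: eq_bigr => t _.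
by rewrite trmx_mul trmxK.
Qed.

Lemma blk_Y i j : blk Ymx i j = \sum_(t < T) vblk (y t) i *m (vblk (y t) j)^T.
Proof.
apply/matrixP => r s; rewrite mxE /Ymx !summxE; apply: eq_bigr => t _.
by rewrite !mx11_mulE !mxE.
Qed.

Definition Dz (Z : 'M[R]_(N * m)) (e : nat) : 'M[R]_m :=
  \sum_(j < N) blk Z (shiftN j e) j.

Lemma DY e : (0 < N)%N -> (0 < T)%N -> Dz Ymx e = (N * T)%:R *: sampleCov y e.
Proof.
move=> N0 T0.
have NT0 : (N * T)%:R != 0 :> R by rewrite pnatr_eq0 muln_eq0 negb_or -!lt0n N0 T0.
rewrite /sampleCov scalerA mulfV // scale1r exchange_big /=.
by apply: eq_bigr => j _; rewrite blk_Y.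
Qed.

Lemma DSig (Sig : 'M[R]_(N * m)) (S : nat -> 'M[R]_m) e :
  (forall i j : 'I_N, blk Sig i j = S (cdiff N i j)) -> (e < N)%N ->
  Dz Sig e = N%:R *: S e.
Proof.
move=> hS eN; rewrite /Dz.
under eq_bigr => j _ do rewrite hS cdiff_shift //.
by rewrite sumr_const card_ord scaler_nat.
Qed.

Lemma Wz_tr (Z : 'M[R]_(N * m)) d : Z^T = Z -> Wz Z d = (Dz Z d)^T.
Proof.
move=> hZ; rewrite /Wz /Dz raddf_sum /=; apply: eq_bigr => j _.
by rewrite -blk_tr hZ.
Qed.

Lemma Wz_shift (Z : 'M[R]_(N * m)) d : (d < N)%N -> Wz Z d = Dz Z ((N - d) %% N).
Proof.
move=> dN; rewrite /Wz /Dz (reindex_inj (@shiftj_inj N d dN)) /=.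
by apply: eq_bigr => j _; rewrite shift_shift.
Qed.

Lemma trmxZ p q c (A : 'M[R]_(p, q)) : (c *: A)^T = c *: A^T.
Proof. by apply/matrixP => i j; rewrite !mxE. Qed.

Lemma trace_identity (M : 'I_n.+1 -> 'M[R]_m) (Sig : 'M[R]_(N * m)) (S : nat -> 'M[R]_m) :
  (n < N)%N -> (0 < T)%N -> Sig^T = Sig ->
  (forall i j : 'I_N, blk Sig i j = S (cdiff N i j)) ->
  (forall k, (k <= n)%N -> S k = sampleCov y k) ->
  \tr (bigM N M *m Ymx) = T%:R * \tr (bigM N M *m Sig).
Proof.
move=> nN T0 hsym hS hSk.
have N0 : (0 < N)%N by apply: leq_ltn_trans nN.
rewrite !tr_bigM mulr_sumr; apply: eq_bigr => d _.
suff -> : Gd N M d *m Wz Ymx d = T%:R *: (Gd N M d *m Wz Sig d) by rewrite linearZ.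
have dN := ltn_ord d.
rewrite /Gd; case: ifP => hd.
  rewrite !Wz_tr ?Ymx_sym // DY // (DSig hS) // hSk //.
  move: (sampleCov y d) => C.
  by rewrite !trmxZ -!scalemxAr scalerA natrM mulrC.
case: ifP => he; last by rewrite !mul0mx scaler0.
have eN : ((N - d) %% N < N)%N by rewrite ltn_pmod.
rewrite !Wz_shift // DY // (DSig hS) // hSk //.
move: (sampleCov y _) => C.
by rewrite -!scalemxAr scalerA natrM mulrC.
Qed.
End E.


Section F.
Variable R : realType.

Lemma getME n m (M : 'I_n.+1 -> 'M[R]_m) k (hk : (k < n.+1)%N) :
  getM M k = M (Ordinal hk).
Proof. exact: (getM_ord M (Ordinal hk)). Qed.

Lemma blknE N m (A : 'M[R]_(N * m)) k l (hk : (k < N)%N) (hl : (l < N)%N) :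
  blkn A k l = blk A (Ordinal hk) (Ordinal hl).
Proof. exact: (blkn_ord A (Ordinal hk) (Ordinal hl)). Qed.

Lemma likE N n m T (y : 'I_T -> 'cV[R]_(N * m)) (X : 'I_n.+1 -> 'M[R]_m)
    (Sig : 'M[R]_(N * m)) (S : nat -> 'M[R]_m) :
  (n < N)%N -> (0 < T)%N -> Sig^T = Sig ->
  (forall i j : 'I_N, blk Sig i j = S (cdiff N i j)) ->
  (forall k, (k <= n)%N -> S k = sampleCov y k) ->
  likelihood X y = ((Num.sqrt (2 * pi)) ^- (N * m)) ^+ T *
    (Num.sqrt (\det (bigM N X)) * expR (- (1 / 2) * \tr (bigM N X *m Sig))) ^+ T.
Proof.
move=> nN T0 hsym hS hSk.
rewrite /likelihood /density !big_split /= !prodr_const card_ord -expR_sum.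
rewrite -mulr_sumr sum_quad (trace_identity _ nN T0 hsym hS hSk).
by rewrite mulrCA expRM_natl exprMn mulrA.
Qed.
End F.

Lemma sqE (R : realType) (d t : R) : 0 <= d ->
  (Num.sqrt d * expR (- (1 / 2) * t)) ^+ 2 = d * expR (- t).
Proof.
move=> d0; rewrite exprMn sqr_sqrtr // -expRM_natl; congr (_ * expR _).

lra.
Qed.

Unset Implicit Arguments.
Theorem theorem4 (R : realType) (m n N T : nat)
  (hm : (1 <= m)%N) (hn : (1 <= n)%N) (hN : (2 * n < N)%N) (hT : (1 <= T)%N)
  (y : 'I_T -> 'cV[R]_(N * m)) (Sig : 'M[R]_(N * m)) :
  circ_band_ext n y Sig ->
  let Mhat : 'I_n.+1 -> 'M[R]_m := fun k => blkn (invmx Sig) k 0 in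
  admissible N Mhat /\
  forall M : 'I_n.+1 -> 'M[R]_m, admissible N M -> (exists k, M k <> Mhat k) ->
    likelihood M y < likelihood Mhat y.
Proof.
move=> [[hsym hpos] [[S [hS hSk]] [[C hC] hband]]] Mhat.
have nN : (n < N)%N.
  by apply: leq_ltn_trans hN; rewrite mul2n -addnn leq_addr.
have N0 : (0 < N)%N by apply: leq_ltn_trans nN.
have hSig : posdef Sig by split.
have [dS _] := detbound hSig.
have uS : Sig \in unitmx by rewrite unitmxE unitfE lt0r_neq0.
have symI : (invmx Sig)^T = invmx Sig by rewrite trmx_inv hsym.
have hI : posdef (invmx Sig).
  split => // x x0.
  have z0 : invmx Sig *m x != 0 by apply: unit_inj; rewrite ?unitmx_inv.
  have := hpos _ z0.
  by rewrite trmx_mul symI !mulmxA -(mulmxA _ Sig) mulmxV // mulmx1.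
have getMhat k : (k <= n)%N -> getM Mhat k = C k.
  move=> kn; have kn1 : (k < n.+1)%N by [].
  have kN : (k < N)%N by apply: leq_ltn_trans nN.
  rewrite (getME _ kn1) /Mhat /= (blknE _ kN N0) hC; congr C.
  by apply: cdiffP => //; rewrite add0n.
have bigMhat : bigM N Mhat = invmx Sig.
  apply: blk_inj => i j; rewrite blk_bigM.
  case: ifP => h1; first by rewrite getMhat // hC.
  case: ifP => h2; first by rewrite getMhat // -hC -blk_tr symI.
  by rewrite hband // leq_min !ltnNge h1 h2.
split.
  split; last by rewrite bigMhat.
  have -> : Mhat ord0 = blk (invmx Sig) (Ordinal N0) (Ordinal N0) by exact: blknE.
  by rewrite -blk_tr symI.
move=> M [hM0 hMp] [k hk].
have neq : bigM N M != invmx Sig.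
  apply/eqP => e; apply: hk.
  have kN : (k < N)%N by apply: leq_ltn_trans nN; exact: leq_ord.
  have := congr1 (fun Z => blk Z (Ordinal kN) (Ordinal N0)) e => /=.
  have ck : cdiff N k 0 = k by apply: cdiffP => //; rewrite add0n.
  rewrite blk_bigM /= ck leq_ord getM_ord => ->.
  by rewrite /Mhat; symmetry; exact: blknE.
set A := bigM N M in neq *.
have [le1 eq1] := core hMp hSig.
have lt1 : \det A * \det Sig < expR (\tr (A *m Sig) - (N * m)%:R).
  rewrite lt_neqAle le1 andbT; apply/eqP => /eq1 AS1; apply: (negP neq); apply/eqP.
  by rewrite -[A]mulmx1 -(mulmxV uS) mulmxA AS1 mul1mx.
have T0 : (0 < T)%N by [].
rewrite (likE M nN T0 hsym hS hSk) (likE Mhat nN T0 hsym hS hSk) bigMhat.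
have c0 : 0 < (Num.sqrt (2 * pi)) ^- (N * m) :> R.
  by rewrite invr_gt0 exprn_gt0 // sqrtr_gt0 mulr_gt0 // pi_gt0.
rewrite ltr_pM2l ?exprn_gt0 //.
have [dA _] := detbound hMp.
rewrite ltr_pXn2r // ?qualifE /= ?mulr_ge0 ?sqrtr_ge0 ?expR_ge0 //.
rewrite -(@ltr_pXn2r _ 2) // ?qualifE /= ?mulr_ge0 ?sqrtr_ge0 ?expR_ge0 //.
rewrite !sqE ?ltW // ?det_inv ?invr_gt0 //.
rewrite mulVmx // mxtrace1 expRN ltr_pdivrMr ?expR_gt0 //.
rewrite -mulrA mulrC ltr_pdivlMr // mulrC -expRD.
by rewrite mulrC addrC.
Qed.
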